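(* Let $p(z)=z^n+a_nz^{n-1}+\cdots+a_2z+a_1$ be a complex monic polynomial with $n\geq2$ and $a_1\neq0$. If $z\in\mathbb{C}$ is any zero of $p$, then $$|z|\leq\left\{\frac{1}{2}\sqrt{\frac{\delta+1+\sqrt{(\delta-1)^2+4\delta'}}{2}}+\frac{1}{2}\left(\frac{1}{2}\left(\delta_1+\delta+\sqrt{(\delta_1-\delta)^2+4\delta_2}\right)+1\right)^{1/4}\right\}^{1/2}.$$
   Context: Let $C_p$ be the $n\times n$ matrix whose first row is $(-a_n,-a_{n-1},\dots,-a_2,-a_1)$, whose entries $(k+1,k)$ equal $1$ for $k=1,\dots,n-1$, and whose other entries are $0$. Define numbers $b_j,c_j,d_j$ ($j=1,\dots,n$) by: the first row of $C_p^2$ is $(b_n,b_{n-1},\dots,b_1)$, the first row of $C_p^3$ is $(c_n,\dots,c_1)$, the first row of $C_p^4$ is $(d_n,\dots,d_1)$ (so $b_j=a_na_j-a_{j-1}$, $c_j=-a_nb_j+a_{n-1}a_j-a_{j-2}$ with $a_0=a_{-1}=0$). Set $\alpha=\sum_{j=1}^n|a_j|^2$, $\beta=\sum_{j=1}^n|b_j|^2$, $\gamma=-\sum_{j=1}^n b_j\overline{a_j}$, $\delta=\frac{1}{2}\left(\alpha+\beta+\sqrt{(\alpha-\beta)^2+4|\gamma|^2}\right)$; $\alpha'=\sum_{j=3}^n|a_j|^2$, $\beta'=\sum_{j=3}^n|b_j|^2$, $\gamma'=-\sum_{j=3}^n\overline{a_j}b_j$, $\delta'=\frac12\left(\alpha'+\beta'+\sqrt{(\alpha'-\beta')^2+4|\gamma'|^2}\right)$;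 $\alpha_1=\sum_{j=1}^n|d_j|^2$, $\beta_1=\sum_{j=1}^n|c_j|^2$, $\gamma_1=\sum_{j=1}^n d_j\overline{c_j}$, $\delta_1=\frac12\left(\alpha_1+\beta_1+\sqrt{(\alpha_1-\beta_1)^2+4|\gamma_1|^2}\right)$; $\gamma_2=\sum_{j=1}^n d_j\overline{b_j}$, $\gamma_3=\sum_{j=1}^n d_j\overline{a_j}$, $\gamma_4=\sum_{j=1}^n c_j\overline{b_j}$, $\gamma_5=\sum_{j=1}^n c_j\overline{a_j}$, and $\delta_2=\frac12\Big(|\gamma_2|^2+|\gamma_3|^2+|\gamma_4|^2+|\gamma_5|^2+\sqrt{\big((|\gamma_2|^2+|\gamma_3|^2)-(|\gamma_4|^2+|\gamma_5|^2)\big)^2+4|\gamma_2\overline{\gamma_4}+\gamma_3\overline{\gamma_5}|^2}\Big)$. *)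

(* Defs.v *)
From HB Require Import structures.
From mathcomp Require Import all_boot all_order all_algebra.
From mathcomp Require Import reals.
From mathcomp.real_closed Require Import complex.
Set Implicit Arguments. Unset Strict Implicit. Unset Printing Implicit Defensive.
Import Order.TTheory GRing.Theory Num.Theory.
Local Open Scope ring_scope.

Section Cauchy.
Variables (R : realType) (n : nat) (a : nat -> R[i]).

Definition monic_poly_of : {poly R[i]} :=
  'X^n + \sum_(1 <= j < n.+1) a j *: 'X^(j.-1).

(* Companion matrix C_p (0-indexed): row 0 is (-a_n, ..., -a_1),
   entries (k+1, k) are 1, others 0. *)
Definition companion : 'M[R[i]]_n :=
  \matrix_(i < n, j < n)
    (if i == 0 :> nat then - a (n - j)
     else if i == j.+1 :> nat then 1 else 0).

Definition entn (M : 'M[R[i]]_n) (i j : nat) : R[i] :=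
  match (insub i : option 'I_n), (insub j : option 'I_n) with
  | Some i', Some j' => M i' j'
  | _, _ => 0
  end.

(* first row of C_p^2 is (b_n, ..., b_1), i.e. b_j is at 0-indexed column n-j *)
Definition bcoef (j : nat) : R[i] := entn (companion ^+ 2) 0 (n - j).
Definition ccoef (j : nat) : R[i] := entn (companion ^+ 3) 0 (n - j).
Definition dcoef (j : nat) : R[i] := entn (companion ^+ 4) 0 (n - j).

Definition sq (x : R[i]) : R[i] := `|x| ^+ 2.
Definition cj (x : R[i]) : R[i] := Num.conj x.
Definition sqrt (x : R[i]) : R[i] := sqrtC x.

Definition alpha : R[i] := \sum_(1 <= j < n.+1) sq (a j).
Definition beta : R[i] := \sum_(1 <= j < n.+1) sq (bcoef j).
Definition gamma : R[i] := - \sum_(1 <= j < n.+1) bcoef j * (cj (a j)).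
Definition delta : R[i] :=
  (alpha + beta + sqrt ((alpha - beta) ^+ 2 + 4 * sq gamma)) / 2.

Definition alpha' : R[i] := \sum_(3 <= j < n.+1) sq (a j).
Definition beta' : R[i] := \sum_(3 <= j < n.+1) sq (bcoef j).
Definition gamma' : R[i] := - \sum_(3 <= j < n.+1) (cj (a j)) * bcoef j.
Definition delta' : R[i] :=
  (alpha' + beta' + sqrt ((alpha' - beta') ^+ 2 + 4 * sq gamma')) / 2.

Definition alpha1 : R[i] := \sum_(1 <= j < n.+1) sq (dcoef j).
Definition beta1 : R[i] := \sum_(1 <= j < n.+1) sq (ccoef j).
Definition gamma1 : R[i] := \sum_(1 <= j < n.+1) dcoef j * (cj (ccoef j)).
Definition delta1 : R[i] :=
  (alpha1 + beta1 + sqrt ((alpha1 - beta1) ^+ 2 + 4 * sq gamma1)) / 2.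

Definition gamma2 : R[i] := \sum_(1 <= j < n.+1) dcoef j * (cj (bcoef j)).
Definition gamma3 : R[i] := \sum_(1 <= j < n.+1) dcoef j * (cj (a j)).
Definition gamma4 : R[i] := \sum_(1 <= j < n.+1) ccoef j * (cj (bcoef j)).
Definition gamma5 : R[i] := \sum_(1 <= j < n.+1) ccoef j * (cj (a j)).
Definition delta2 : R[i] :=
  (sq gamma2 + sq gamma3 + sq gamma4 + sq gamma5
   + sqrt (((sq gamma2 + sq gamma3) - (sq gamma4 + sq gamma5)) ^+ 2
               + 4 * sq (gamma2 * (cj (gamma4)) + gamma3 * (cj (gamma5))))) / 2.

(* all quantities below are nonnegative reals inside C = R[i];
   x^(1/4) is written sqrtC (sqrtC x) *)
Definition bound15 : R[i] :=
  sqrt (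
    sqrt ((delta + 1 + sqrt ((delta - 1) ^+ 2 + 4 * delta')) / 2) / 2
    + sqrt (sqrt
        ((delta1 + delta + sqrt ((delta1 - delta) ^+ 2 + 4 * delta2)) / 2 + 1)) / 2).

End Cauchy.

(* Main.v *)
Require Import Defs.
From HB Require Import structures.
From mathcomp Require Import all_boot all_order all_algebra.
From mathcomp Require Import reals.
From mathcomp.real_closed Require Import complex.
From mathcomp Require Import zify ring lra.
Import Order.TTheory GRing.Theory Num.Theory.
Local Open Scope ring_scope.

Module Aux.
Set Implicit Arguments. Unset Strict Implicit. Unset Printing Implicit Defensive.
Local Open Scope complex_scope.

Lemma L0R (R : rcfType) (A B g x y : R) : 0 <= g -> 0 <= x -> 0 <= y ->
  A * x^+2 + B * y^+2 + 2 * g * x * y <=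
  (A + B + Num.sqrt ((A - B)^+2 + 4 * g^+2)) / 2 * (x^+2 + y^+2).
Proof.
move=> g0 x0 y0.
set S := Num.sqrt _.
have S0 : 0 <= S by rewrite sqrtr_ge0.
have S2 : S ^+ 2 = (A - B)^+2 + 4 * g^+2 by rewrite sqr_sqrtr // addr_ge0 ?sqr_ge0 ?mulr_ge0.
have p0 : 0 <= B - A + S.
  have : (A - B) ^+ 2 <= S ^+ 2 by rewrite S2 lerDl mulr_ge0 ?sqr_ge0.
  nra.
have q0 : 0 <= A - B + S.
  have : (A - B) ^+ 2 <= S ^+ 2 by rewrite S2 lerDl mulr_ge0 ?sqr_ge0.
  nra.
set p := B - A + S. set q := A - B + S.
have pq : p * q = 4 * g ^+ 2 by rewrite /p /q; nra.
have H1 : 0 <= p * x^+2 + q * y^+2 by rewrite addr_ge0 // mulr_ge0 // sqr_ge0.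
have H2 : (4 * g * x * y) ^+ 2 <= (p * x^+2 + q * y^+2) ^+ 2.
  rewrite -subr_ge0.
  have -> : (p * x ^+ 2 + q * y ^+ 2) ^+ 2 - (4 * g * x * y) ^+ 2 =
    (p * x^+2 - q * y^+2) ^+ 2 + 4 * x^+2 * y^+2 * (p * q - 4 * g^+2) by ring.
  by rewrite pq subrr mulr0 addr0 sqr_ge0.
have H3 : 4 * g * x * y <= p * x^+2 + q * y^+2.
  rewrite -(ler_pXn2r (_ : (0 < 2)%N)) // ?nnegrE // !mulr_ge0 //.
have E : (A + B + S) / 2 * (x^+2 + y^+2) = A * x^+2 + B * y^+2 + (p * x^+2 + q * y^+2)/2.
  by rewrite /p /q; field.
rewrite E; clearbody S p q.
set P := _ + q * _ in H3 *.
lra.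
Qed.
Lemma sqrtC_R (R : realType) (r : R) : 0 <= r -> sqrtC (r%:C : R[i]) = (Num.sqrt r)%:C.
Proof.
move=> r0; rewrite -{1}(sqr_sqrtr r0) rmorphXn sqrCK // ler0c sqrtr_ge0 //.
Qed.

Lemma L0C (R : realType) (A B g x y : R[i]) : A \is Num.real -> B \is Num.real ->
  0 <= g -> 0 <= x -> 0 <= y ->
  A * x^+2 + B * y^+2 + 2 * g * x * y <=
  (A + B + sqrtC ((A - B)^+2 + 4 * g^+2)) / 2 * (x^+2 + y^+2).
Proof.
move=> /complex_realP[a ->] /complex_realP[b ->].
move=> g0 x0 y0.
have [g' eg] := complex_realP _ (ger0_real g0).
have [x' ex] := complex_realP _ (ger0_real x0).
have [y' ey] := complex_realP _ (ger0_real y0).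
move: g0 x0 y0; rewrite eg ex ey !ler0c => g0 x0 y0.
have E : (a%:C - b%:C)^+2 + 4 * g'%:C^+2 = ((a-b)^+2 + 4*g'^+2)%:C :> R[i].
  by rewrite rmorphD rmorphXn rmorphM rmorph_nat rmorphXn rmorphB.
rewrite E sqrtC_R; last by rewrite addr_ge0 ?sqr_ge0 ?mulr_ge0 ?sqr_ge0.
have -> : a%:C * x'%:C ^+ 2 + b%:C * y'%:C ^+ 2 + 2 * g'%:C * x'%:C * y'%:C =
  (a * x'^+2 + b * y'^+2 + 2 * g' * x' * y')%:C :> R[i].
  by rewrite !(rmorphXn, rmorphD, rmorphM, rmorph_nat).
set S := Num.sqrt _.
have -> : (a%:C + b%:C + S%:C) / 2 * (x'%:C ^+ 2 + y'%:C ^+ 2) =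
  ((a + b + S) / 2 * (x'^+2 + y'^+2))%:C :> R[i].
  by rewrite !(rmorphXn, rmorphD, rmorphM, rmorph_nat, fmorphV).
by rewrite lecR; apply: L0R.
Qed.
Local Close Scope complex_scope.
Section Vec.
Variables (R : realType) (I : finType) (P : pred I).
Local Notation C := (R[i]).
Implicit Types x y : I -> C.

Definition nrm x := \sum_(i | P i) `|x i| ^+ 2.
Definition dot x y := \sum_(i | P i) x i * (y i)^*.

Lemma nrm_ge0 x : 0 <= nrm x.
Proof. by apply: sumr_ge0 => i _; rewrite exprn_ge0. Qed.

Lemma nrmE x : nrm x = dot x x.
Proof. by apply: eq_bigr => i _; rewrite normCK. Qed.

Lemma dotC x y : dot y x = (dot x y)^*.
Proof. rewrite /dot rmorph_sum; apply: eq_bigr => i _; by rewrite rmorphM /= conjCK mulrC. Qed.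

Lemma CS x y : `|dot x y| ^+ 2 <= nrm x * nrm y.
Proof.
have [Y0|Ypos] := eqVneq (nrm y) 0.
  have y0 : forall i, P i -> y i = 0.
    move=> i Pi; apply/eqP; rewrite -normr_eq0 -sqrf_eq0.
    by apply/eqP; apply: (psumr_eq0P _ Y0) => // j _; rewrite exprn_ge0.
  have -> : dot x y = 0 by rewrite /dot big1 // => i /y0 ->; rewrite conjC0 mulr0.
  by rewrite normr0 expr0n /= Y0 mulr0.
have Yp : 0 < nrm y by rewrite lt_def Ypos nrm_ge0.
set Y := nrm y; set X := nrm x; set D := dot x y.
have YR : Y^* = Y by rewrite geC0_conj // nrm_ge0.
have expand : forall a b : C, a^* = a -> \sum_(i | P i) `|a * x i - b * y i| ^+ 2 =
     a * a * dot x x - a * b^* * dot x y - a * b * dot y x + b * b^* * dot y y.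
  move=> a b aR; rewrite /dot !mulr_sumr -!sumrB -big_split /=; apply: eq_bigr => i _.
  rewrite normCK rmorphB !rmorphM /= aR; ring.
have key : \sum_(i | P i) `|Y * x i - D * y i| ^+ 2 = Y * (X * Y - `|D|^+2).
  rewrite expand // -nrmE -/X -nrmE -/Y -/D dotC -/D normCK; ring.
have : 0 <= Y * (X * Y - `|D|^+2) by rewrite -key sumr_ge0 // => i _; rewrite exprn_ge0.
by rewrite pmulr_rge0 // subr_ge0 mulrC.
Qed.

Definition Dl (A B g : C) : C := (A + B + sqrtC ((A - B)^+2 + 4 * g^+2)) / 2.

Lemma Dl_ge0 A B g : 0 <= A -> 0 <= B -> 0 <= g -> 0 <= Dl A B g.
Proof.
move=> A0 B0 g0; rewrite /Dl divr_ge0 // !addr_ge0 // sqrtC_ge0 addr_ge0 //.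
  by rewrite real_exprn_even_ge0 // rpredB // ger0_real.
by rewrite mulr_ge0 // exprn_ge0.
Qed.

Lemma ReD2 (u : C) : u + u^* <= 2 * `|u|.
Proof.
have -> : u + u^* = 2 * 'Re u by rewrite ReE mulrC divfK // pnatr_eq0.
rewrite ler_pM2l ?ltr0n //.
apply: le_trans (real_ler_norm (Creal_Re u)) _.
exact: (leif_normC_Re_Creal u).1.
Qed.

Lemma nrmD x y : nrm (fun i => x i + y i) = nrm x + nrm y + (dot x y + (dot x y)^*).
Proof.
rewrite !nrmE -dotC /dot -!big_split /=; apply: eq_bigr => i _.
rewrite rmorphD /=; ring.
Qed.

Lemma nrmZ (s : C) x : nrm (fun i => s * x i) = `|s|^+2 * nrm x.
Proof. by rewrite /nrm mulr_sumr; apply: eq_bigr => i _; rewrite normrM exprMn. Qed.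

Lemma dotZZ (s t : C) x y : dot (fun i => s * x i) (fun i => t * y i) = s * t^* * dot x y.
Proof. by rewrite /dot mulr_sumr; apply: eq_bigr => i _; rewrite rmorphM /=; ring. Qed.

Lemma pair x y (s t : C) :
  nrm (fun i => s * x i + t * y i) <= Dl (nrm x) (nrm y) `|dot x y| * (`|s|^+2 + `|t|^+2).
Proof.
rewrite nrmD !nrmZ dotZZ.
apply: le_trans (_ : `|s|^+2 * nrm x + `|t|^+2 * nrm y + 2 * `|dot x y| * `|s| * `|t| <= _).
  rewrite lerD2l; apply: le_trans (ReD2 _) _.
  rewrite !normrM norm_conjC.
  by have -> : 2 * `|dot x y| * `|s| * `|t| = 2 * (`|s| * `|t| * `|dot x y|) by ring.
rewrite [_ * nrm x]mulrC [_ * nrm y]mulrC.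
by apply: L0C; rewrite ?normr_ge0 // ger0_real // nrm_ge0.
Qed.

Lemma CSn x y : `|dot x y| <= sqrtC (nrm x) * sqrtC (nrm y).
Proof.
rewrite -sqrtCM ?nnegrE ?nrm_ge0 //.
rewrite -(sqrCK (normr_ge0 (dot x y))) ler_sqrtC ?nnegrE ?exprn_ge0 ?mulr_ge0 ?nrm_ge0 //.
exact: CS.
Qed.

Lemma block x y (a1 a2 g2 X1 X2 : C) : 0 <= a1 -> 0 <= a2 -> 0 <= g2 -> 0 <= X1 -> 0 <= X2 ->
  nrm x <= a1 * X1 -> nrm y <= a2 * X2 -> `|dot x y| ^+ 2 <= g2 * X1 * X2 ->
  nrm (fun i => x i + y i) <= Dl a1 a2 (sqrtC g2) * (X1 + X2).
Proof.
move=> a10 a20 g20 X10 X20 hx hy hd.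
rewrite nrmD.
have hd' : `|dot x y| <= sqrtC g2 * sqrtC X1 * sqrtC X2.
  rewrite -!sqrtCM ?nnegrE ?mulr_ge0 //.
  by rewrite -(sqrCK (normr_ge0 (dot x y))) ler_sqrtC ?nnegrE ?exprn_ge0 ?mulr_ge0.
apply: le_trans (_ : a1 * sqrtC X1 ^+ 2 + a2 * sqrtC X2 ^+ 2 + 2 * sqrtC g2 * sqrtC X1 * sqrtC X2 <= _).
  rewrite !sqrtCK; apply: lerD; first exact: lerD.
  apply: le_trans (ReD2 _) _; rewrite -!mulrA ler_pM2l ?ltr0n //.
  by rewrite !mulrA.
have -> : X1 + X2 = sqrtC X1 ^+ 2 + sqrtC X2 ^+ 2 by rewrite !sqrtCK.
apply: L0C; rewrite ?ger0_real ?sqrtC_ge0 //.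
Qed.

Lemma duality (v W : I -> C) (lam : C) : 0 <= lam -> 0 <= dot v W ->
  nrm W <= lam * dot v W -> dot v W <= lam * nrm v.
Proof.
move=> l0 S0 hW.
have [->|Sp] := eqVneq (dot v W) 0; first by rewrite mulr_ge0 ?nrm_ge0.
have Spos : 0 < dot v W by rewrite lt_def Sp S0.
have : dot v W ^+ 2 <= nrm v * (lam * dot v W).
  rewrite -{1}(ger0_norm S0); apply: le_trans (CS _ _) _.
  by rewrite ler_wpM2l // nrm_ge0.
have -> : nrm v * (lam * dot v W) = lam * nrm v * dot v W by ring.
by rewrite expr2 ler_pM2r.
Qed.

End Vec.

Section B.
Variables (R : realType) (I : finType).
Local Notation C := (R[i]).
Local Notation T := (@predT I).

Lemma nrm_conj (P : pred I) (x : I -> C) : nrm P (fun i => (x i)^*) = nrm P x.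
Proof. by apply: eq_bigr => i _; rewrite norm_conjC. Qed.

Lemma dot_conj (P : pred I) (x y : I -> C) :
  `|dot P (fun i => (x i)^*) (fun i => (y i)^*)| = `|dot P x y|.
Proof.
rewrite -norm_conjC /dot rmorph_sum; congr `|_|; apply: eq_bigr => i _.
by rewrite /= rmorphM /= !conjCK.
Qed.

Lemma nrm_mask (Q : pred I) (v : I -> C) :
  nrm T (fun i => if Q i then v i else 0) = nrm Q v.
Proof.
rewrite /nrm [RHS]big_mkcond; apply: eq_bigr => i _.
by case: (Q i); rewrite ?normr0 ?expr0n.
Qed.

Lemma dot_mask (Q : pred I) (x v : I -> C) :
  dot T x (fun i => if Q i then v i else 0) = dot Q x v.
Proof.
rewrite /dot [RHS]big_mkcond; apply: eq_bigr => i _.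
by case: (Q i); rewrite ?conjC0 ?mulr0.
Qed.

Lemma pair_ge0 (P : pred I) (x y : I -> C) : 0 <= Dl (nrm P x) (nrm P y) `|dot P x y|.
Proof. by rewrite Dl_ge0 ?nrm_ge0. Qed.

Lemma B1 (Q : pred I) (r0 r1 v : I -> C) :
  `|\sum_i r0 i * v i|^+2 + `|\sum_i r1 i * v i|^+2 + nrm Q v <=
  Dl (Dl (nrm T r0) (nrm T r1) `|dot T r0 r1|) 1
     (sqrtC (Dl (nrm Q r0) (nrm Q r1) `|dot Q r0 r1|)) * nrm T v.
Proof.
set p0 := \sum_i r0 i * v i; set p1 := \sum_i r1 i * v i.
set d := Dl (nrm T r0) _ _; set d' := Dl (nrm Q r0) _ _.
have d0 : 0 <= d by apply: pair_ge0.
have d'0 : 0 <= d' by apply: pair_ge0.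
set A := fun i => p0 * (r0 i)^* + p1 * (r1 i)^*.
set B := fun i => if Q i then v i else 0.
set X1 := `|p0|^+2 + `|p1|^+2.
have X10 : 0 <= X1 by rewrite addr_ge0 ?exprn_ge0.
have X20 : 0 <= nrm Q v by apply: nrm_ge0.
have hS : dot T v (fun i => A i + B i) = X1 + nrm Q v.
  have -> : dot T v (fun i => A i + B i) = 
     p0^* * (\sum_i r0 i * v i) + p1^* * (\sum_i r1 i * v i) + dot T v B.
    rewrite /dot !mulr_sumr -!big_split /=; apply: eq_bigr => i _.
    rewrite /A !rmorphD !rmorphM /= !conjCK; ring.
  by rewrite dot_mask -/p0 -/p1 -nrmE /X1 !normCK [_^* * _]mulrC [p1^* * _]mulrC.
rewrite -/X1 -hS; apply: (duality (lam := Dl d 1 (sqrtC d'))).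
- by rewrite Dl_ge0 ?sqrtC_ge0.
- by rewrite hS addr_ge0.
rewrite hS; apply: block => //.
- have := pair T (fun i => (r0 i)^*) (fun i => (r1 i)^*) p0 p1.
  by rewrite !nrm_conj dot_conj mulrC.
- by rewrite nrm_mask mul1r.
- rewrite dot_mask; apply: le_trans (CS _ _ _) _.
  rewrite ler_wpM2r ?nrm_ge0 //.
  have := pair Q (fun i => (r0 i)^*) (fun i => (r1 i)^*) p0 p1.
  by rewrite !nrm_conj dot_conj mulrC.
Qed.
End B.

Section B2.
Variables (R : realType).
Local Notation C := (R[i]).

Definition v2 (u0 u1 : C) : 'I_2 -> C := fun k => if val k == 0%N then u0 else u1.

Lemma sum2 (F : 'I_2 -> C) : \sum_(i | predT i) F i = F ord0 + F (lift ord0 ord0).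
Proof. by rewrite big_ord_recl big_ord1. Qed.

Lemma nrm2 u0 u1 : nrm predT (v2 u0 u1) = `|u0|^+2 + `|u1|^+2.
Proof. by rewrite /nrm sum2. Qed.

Lemma dot2 u0 u1 w0 w1 : dot predT (v2 u0 u1) (v2 w0 w1) = u0 * w0^* + u1 * w1^*.
Proof. by rewrite /dot sum2. Qed.

End B2.

Section B3.
Variables (R : realType) (I : finType).
Local Notation C := (R[i]).
Local Notation T := (@predT I).

Lemma dot_bil (P : pred I) (s1 s2 t1 t2 : C) (x1 x2 y1 y2 : I -> C) :
  dot P (fun i => s1 * x1 i + s2 * x2 i) (fun i => t1 * y1 i + t2 * y2 i) =
  s1 * t1^* * dot P x1 y1 + s1 * t2^* * dot P x1 y2 +
  s2 * t1^* * dot P x2 y1 + s2 * t2^* * dot P x2 y2.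
Proof.
rewrite /dot !mulr_sumr -!big_split /=; apply: eq_bigr => i _.
rewrite rmorphD !rmorphM /=; ring.
Qed.

Lemma dot_cc (P : pred I) (x y : I -> C) :
  dot P (fun i => (x i)^*) (fun i => (y i)^*) = (dot P x y)^*.
Proof.
rewrite /dot rmorph_sum; apply: eq_bigr => i _.
by rewrite /= rmorphM /= !conjCK mulrC.
Qed.

Lemma B2 (rd rc ra rb v : I -> C) (g2 g3 g4 g5 : C) :
  g2 = dot T rd rb -> g3 = dot T rd ra ->
  g4 = dot T rc rb -> g5 = dot T rc ra ->
  `|\sum_i rd i * v i|^+2 + `|\sum_i rc i * v i|^+2 +
  (`|\sum_i ra i * v i|^+2 + `|\sum_i rb i * v i|^+2) <=
  Dl (Dl (nrm T rd) (nrm T rc) `|dot T rd rc|) (Dl (nrm T ra) (nrm T rb) `|dot T ra rb|)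
     (sqrtC (Dl (`|g2|^+2 + `|g3|^+2) (`|g4|^+2 + `|g5|^+2) `|g2 * g4^* + g3 * g5^*|))
  * nrm T v.
Proof.
move=> e2 e3 e4 e5.
set pd := \sum_i rd i * v i; set pc := \sum_i rc i * v i.
set pa := \sum_i ra i * v i; set pb := \sum_i rb i * v i.
set d1 := Dl (nrm T rd) _ _; set d := Dl (nrm T ra) _ _.
set d2 := Dl (_ + _) _ _.
have d10 : 0 <= d1 by apply: pair_ge0.
have d0 : 0 <= d by apply: pair_ge0.
have d20 : 0 <= d2 by rewrite /d2 Dl_ge0 ?addr_ge0 ?exprn_ge0 ?normr_ge0.
set A := fun i => pd * (rd i)^* + pc * (rc i)^*.
set B := fun i => pa * (ra i)^* + pb * (rb i)^*.
set X1 := `|pd|^+2 + `|pc|^+2.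
set X2 := `|pa|^+2 + `|pb|^+2.
have X10 : 0 <= X1 by rewrite addr_ge0 ?exprn_ge0.
have X20 : 0 <= X2 by rewrite addr_ge0 ?exprn_ge0.
have hS : dot T v (fun i => A i + B i) = X1 + X2.
  have -> : dot T v (fun i => A i + B i) = 
     pd^* * pd + pc^* * pc + (pa^* * pa + pb^* * pb).
    rewrite /pd /pc /pa /pb /dot !mulr_sumr -!big_split /=; apply: eq_bigr => i _.
    rewrite /A /B !rmorphD !rmorphM /= !conjCK; ring.
  by rewrite /X1 /X2 !normCK ![_^* * _]mulrC.
rewrite -hS; apply: (duality (lam := Dl d1 d (sqrtC d2))).

- by rewrite Dl_ge0 ?sqrtC_ge0.
- by rewrite hS addr_ge0.
rewrite hS; apply: block => //.
- have := pair T (fun i => (rd i)^*) (fun i => (rc i)^*) pd pc.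
  by rewrite !nrm_conj dot_conj mulrC.
- have := pair T (fun i => (ra i)^*) (fun i => (rb i)^*) pa pb.
  by rewrite !nrm_conj dot_conj mulrC.
have -> : dot T A B = (pa * (pd^* * g3 + pc^* * g5) + pb * (pd^* * g2 + pc^* * g4))^*.
  rewrite /A /B dot_bil !dot_cc -e2 -e3 -e4 -e5.
  by rewrite !(rmorphD, rmorphM) /= !conjCK; ring.
rewrite norm_conjC.
have -> : pa * (pd^* * g3 + pc^* * g5) + pb * (pd^* * g2 + pc^* * g4) =
   dot predT (v2 pa pb) (fun k => (v2 (pd^* * g3 + pc^* * g5) (pd^* * g2 + pc^* * g4) k)^*).
  by rewrite /dot sum2 /v2 /= !conjCK.
apply: le_trans (CS _ _ _) _.
rewrite nrm_conj nrm2 -/X2 [X2 * _]mulrC ler_wpM2r //.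
have -> : nrm predT (v2 (pd^* * g3 + pc^* * g5) (pd^* * g2 + pc^* * g4)) =
   nrm predT (fun k => pd^* * v2 g3 g2 k + pc^* * v2 g5 g4 k).
  by apply: eq_bigr => k _; rewrite /v2; case: ifP.
apply: le_trans (pair _ _ _ _ _) _.
rewrite !norm_conjC -/X1 ler_wpM2r //.
rewrite /d2 !nrm2 dot2.
by rewrite [`|g3| ^+ 2 + _]addrC [`|g5| ^+ 2 + _]addrC [g3 * _ + _]addrC.
Qed.
End B3.


Lemma reindex (G : zmodType) (n k : nat) (F : nat -> G) : (0 < k)%N ->
  \sum_(k <= j < n.+1) F j = \sum_(c < n | (c < n.+1 - k)%N) F (n - c)%N.
Proof.
move=> k0; rewrite big_nat_rev -{1}(add0n k) big_addn big_mkord.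
rewrite -(big_ord_widen n (fun c => F (n - c)%N)); last by lia.
apply: eq_bigr => i _; congr F; lia.
Qed.

Lemma reindex1 (G : zmodType) (n : nat) (F : nat -> G) :
  \sum_(1 <= j < n.+1) F j = \sum_(c < n) F (n - c)%N.
Proof.
rewrite reindex //; apply: eq_bigl => i; rewrite subn1 /= ltn_ord //.
Qed.


Section Mat.
Variables (R : realType) (n : nat) (a : nat -> R[i]) (z : R[i]).
Local Notation N := n.+1.
Hypothesis hroot : root (monic_poly_of N a) z.

Definition vz : 'cV[R[i]]_N := \col_(i < N) z ^+ (n - i).

Lemma comp_vz : companion N a *m vz = z *: vz.
Proof.
apply/matrixP => i j; rewrite ord1 !mxE.
case: i => [[|i'] hi] /=.
- under eq_bigr => k _ do rewrite !mxE /=.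
  move: hroot; rewrite /root /monic_poly_of hornerD hornerXn horner_sum.
  rewrite (eq_bigr (fun i => a i * z ^+ i.-1)); last by move=> i _; rewrite hornerZ hornerXn.
  rewrite reindex1 subn0 -exprS addr_eq0 => /eqP ->.
  rewrite -sumrN; apply: eq_bigr => k _; rewrite mulNr; congr (- (_ * _)).
  by congr (_ ^+ _); case: k => k hk /=; lia.
- rewrite (bigD1 (Ordinal (ltnW hi))) //= big1 ?addr0.
    by rewrite !mxE /= eqxx mul1r -exprS; congr (_ ^+ _); lia.
  move=> k /negbTE hk; rewrite !mxE /=.
  case: ifP => [/eqP/succn_inj e|]; last by rewrite mul0r.
  by move: hk; rewrite -(inj_eq val_inj) /= e eqxx.
Qed.

Lemma compX_vz m : (companion N a ^+ m) *m vz = z ^+ m *: vz.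
Proof.
elim: m => [|m IH]; first by rewrite expr0 mul1mx scale1r.
by rewrite exprS -mulmxE -mulmxA IH -scalemxAr comp_vz scalerA exprSr.
Qed.

Lemma row0_vz m : \sum_(c < N) (companion N a ^+ m) ord0 c * z ^+ (n - c) = z ^+ (m + n).
Proof.
have := congr1 (fun M : 'M[R[i]]_(N,1) => M ord0 ord0) (compX_vz m).
rewrite !mxE /= subn0 => e; rewrite exprD -e; apply: eq_bigr => c _; by rewrite mxE.
Qed.
End Mat.


Lemma sqrt_mono (R : realType) (x y : R[i]) : 0 <= x -> x <= y -> sqrtC x <= sqrtC y.
Proof. by move=> x0 xy; rewrite ler_sqrtC // nnegrE // (le_trans x0 xy). Qed.

Lemma final (R : realType) (x D D' D1 D2 : R[i]) : 0 <= x ->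
  x ^+ 4 <= Dl D 1 (sqrtC D') -> x ^+ 8 <= Dl D1 D (sqrtC D2) + 1 ->
  0 <= D' -> 0 <= D2 ->
  x <= sqrtC (sqrtC ((D + 1 + sqrtC ((D - 1) ^+ 2 + 4 * D')) / 2) / 2 +
     sqrtC (sqrtC ((D1 + D + sqrtC ((D1 - D) ^+ 2 + 4 * D2)) / 2 + 1)) / 2).
Proof.
move=> x0 h1 h2 D'0 D20.
move: h1 h2; rewrite /Dl !sqrtCK => h1 h2.
set L := (D + 1 + _) / 2 in h1 *; set Y := _ + 1 in h2 *.
have x20 : 0 <= x ^+ 2 by rewrite exprn_ge0.
have a1 : x ^+ 2 <= sqrtC L.
  rewrite -(sqrCK x20) sqrt_mono ?exprn_ge0 // -exprM //.
have a2 : x ^+ 2 <= sqrtC (sqrtC Y).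
  rewrite -(sqrCK x20) sqrt_mono ?exprn_ge0 //.
  rewrite -(sqrCK (exprn_ge0 2 x20)) sqrt_mono ?exprn_ge0 // -!exprM //.
rewrite -(sqrCK x0) sqrt_mono ?exprn_ge0 //.
have -> : x ^+ 2 = x ^+ 2 / 2 + x ^+ 2 / 2.
  exact: splitr.
by apply: lerD; rewrite ler_pM2r ?invr_gt0 ?ltr0n.
Qed.


Lemma entnE (R : realType) (N : nat) (M : 'M[R[i]]_N.+1) (c : 'I_N.+1) :
  entn M 0 c = M ord0 c.
Proof.
rewrite /entn; case: insubP => [i0 _ /= e0|]; last by rewrite ltn0Sn.
case: insubP => [j0 _ /= e1|]; last by rewrite ltn_ord.
by congr (M _ _); apply: val_inj.
Qed.

Lemma geomK (R : realType) (m : nat) (t : R[i]) :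
  t ^+ 2 * \sum_(c < m.+2) t ^+ (m.+1 - c) =
  t ^+ (m.+2) + t ^+ (m.+3) + \sum_(c < m.+2 | (c < m)%N) t ^+ (m.+1 - c).
Proof.
rewrite mulr_sumr !big_ord_recl /= -(big_ord_widen m.+2 (fun c => t ^+ (m.+1 - c))); last by lia.
rewrite -!exprD addrA [t ^+ (2 + (m.+1 - 0)) + _]addrC; congr (_ + _ + _).
- by congr (_ ^+ _); rewrite /bump /=; lia.
- apply: eq_bigr => i _; rewrite -exprD; congr (_ ^+ _).
case: i => i hi /=; rewrite /bump /=; lia.
Qed.

Lemma mainN (R : realType) (m : nat) (a : nat -> R[i]) (z : R[i]) :
  root (monic_poly_of m.+2 a) z -> `|z| <= bound15 m.+2 a.
Proof.
move=> hroot.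
pose v := fun c : 'I_m.+2 => z ^+ (m.+1 - c).
pose ra := fun c : 'I_m.+2 => a (m.+2 - c)%N.
pose rb := fun c : 'I_m.+2 => bcoef m.+2 a (m.+2 - c).
pose rc := fun c : 'I_m.+2 => ccoef m.+2 a (m.+2 - c).
pose rd := fun c : 'I_m.+2 => dcoef m.+2 a (m.+2 - c).
pose Q := fun c : 'I_m.+2 => (c < m)%N.
pose T := @predT 'I_m.+2.
have subK : forall c : 'I_m.+2, (m.+2 - (m.+2 - c))%N = c.
  by move=> [c hc] /=; lia.
have hb : \sum_c rb c * v c = z ^+ (2 + m.+1).
  rewrite -(row0_vz hroot 2); apply: eq_bigr => c _.
  by rewrite /rb /bcoef subK entnE.
have hc : \sum_c rc c * v c = z ^+ (3 + m.+1).
  rewrite -(row0_vz hroot 3); apply: eq_bigr => c _.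
  by rewrite /rc /ccoef subK entnE.
have hd : \sum_c rd c * v c = z ^+ (4 + m.+1).
  rewrite -(row0_vz hroot 4); apply: eq_bigr => c _.
  by rewrite /rd /dcoef subK entnE.
have ha : \sum_c ra c * v c = - z ^+ (1 + m.+1).
  rewrite -(row0_vz hroot 1) expr1 -sumrN; apply: eq_bigr => c _.
  by rewrite !mxE /= mulNr opprK.
have eQ : forall F : nat -> R[i], \sum_(3 <= j < m.+3) F j = \sum_(c | Q c) F (m.+2 - c)%N.
  move=> F; rewrite reindex //; apply: eq_bigl => c.
  by rewrite /Q !subSS subn0.
have eal : alpha m.+2 a = nrm T ra.
  by rewrite /alpha reindex1; apply: eq_bigr.
have ebe : beta m.+2 a = nrm T rb by rewrite /beta reindex1; apply: eq_bigr.
have ega : `|gamma m.+2 a| = `|dot T ra rb|.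
  rewrite /gamma reindex1 normrN -[RHS]norm_conjC -dotC; congr `|_|.
have eal' : alpha' m.+2 a = nrm Q ra by rewrite /alpha' eQ.
have ebe' : beta' m.+2 a = nrm Q rb by rewrite /beta' eQ.
have ega' : `|gamma' m.+2 a| = `|dot Q ra rb|.
  rewrite /gamma' eQ normrN -[RHS]norm_conjC -dotC /dot; congr `|_|.
  by apply: eq_bigr => c _; rewrite mulrC.
have eal1 : alpha1 m.+2 a = nrm T rd by rewrite /alpha1 reindex1; apply: eq_bigr.
have ebe1 : beta1 m.+2 a = nrm T rc by rewrite /beta1 reindex1; apply: eq_bigr.
have ega1 : gamma1 m.+2 a = dot T rd rc by rewrite /gamma1 /cj reindex1; apply: eq_bigr.
have e2 : gamma2 m.+2 a = dot T rd rb by rewrite /gamma2 /cj reindex1; apply: eq_bigr.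
have e3 : gamma3 m.+2 a = dot T rd ra by rewrite /gamma3 /cj reindex1; apply: eq_bigr.
have e4 : gamma4 m.+2 a = dot T rc rb by rewrite /gamma4 /cj reindex1; apply: eq_bigr.
have e5 : gamma5 m.+2 a = dot T rc ra by rewrite /gamma5 /cj reindex1; apply: eq_bigr.
clearbody ra rb rc rd.
have edel : delta m.+2 a = Dl (nrm T ra) (nrm T rb) `|dot T ra rb|.
  by rewrite /delta /Dl /sq eal ebe ega.
have edel' : delta' m.+2 a = Dl (nrm Q ra) (nrm Q rb) `|dot Q ra rb|.
  by rewrite /delta' /Dl /sq eal' ebe' ega'.
have edel1 : delta1 m.+2 a = Dl (nrm T rd) (nrm T rc) `|dot T rd rc|.
  by rewrite /delta1 /Dl /sq eal1 ebe1 ega1.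
have edel2 : delta2 m.+2 a = Dl (`|dot T rd rb|^+2 + `|dot T rd ra|^+2)
   (`|dot T rc rb|^+2 + `|dot T rc ra|^+2)
   `|dot T rd rb * (dot T rc rb)^* + dot T rd ra * (dot T rc ra)^*|.
  by rewrite /delta2 /Dl /sq /cj e2 e3 e4 e5 !addrA.
pose t := `|z| ^+ 2.
have t0 : 0 <= t by rewrite exprn_ge0.
have nz : forall k, `|z ^+ k| ^+ 2 = t ^+ k by move=> k; rewrite normrX exprAC.
have eX : nrm T v = \sum_(c < m.+2) t ^+ (m.+1 - c) by apply: eq_bigr => c _; rewrite nz.
have eW : nrm Q v = \sum_(c < m.+2 | (c < m)%N) t ^+ (m.+1 - c).
  by apply: eq_bigr => c _; rewrite nz.
have pa2 : `|\sum_c ra c * v c| ^+ 2 = t ^+ m.+2 by rewrite ha normrN nz.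
have pb2 : `|\sum_c rb c * v c| ^+ 2 = t ^+ m.+3 by rewrite hb nz.
have pc2 : `|\sum_c rc c * v c| ^+ 2 = t ^+ 2 * t ^+ m.+2 by rewrite hc nz -exprD.
have pd2 : `|\sum_c rd c * v c| ^+ 2 = t ^+ 2 * t ^+ m.+3 by rewrite hd nz -exprD.
have X1 : 1 <= nrm T v.
  rewrite eX (bigD1 ord_max) //= subnn expr0 lerDl sumr_ge0 // => i _.
  by rewrite exprn_ge0.
have Xp : 0 < nrm T v by apply: lt_le_trans X1; rewrite ltr01.
have K : t ^+ 2 * nrm T v = t ^+ m.+2 + t ^+ m.+3 + nrm Q v by rewrite eX eW geomK.
have WX : nrm Q v <= nrm T v.
  rewrite /nrm [X in _ <= X](bigID Q) /= lerDl sumr_ge0 // => i _; exact: exprn_ge0.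
have i1 := B1 Q ra rb v.
rewrite pa2 pb2 -edel -edel' -K ler_pM2r // in i1.
have i2 := @B2 _ _ rd rc ra rb v _ _ _ _ (erefl (dot T rd rb)) (erefl (dot T rd ra))
   (erefl (dot T rc rb)) (erefl (dot T rc ra)).
rewrite pa2 pb2 pc2 pd2 -edel1 -edel -edel2 in i2.
set A := t ^+ m.+2 in K i2; set B := t ^+ m.+3 in K i2.
set W := nrm Q v in K WX; set X := nrm T v in K WX Xp i1 i2.
have i3 : t ^+ 4 * X <= (Dl (delta1 m.+2 a) (delta m.+2 a) (sqrtC (delta2 m.+2 a)) + 1) * X.
  have -> : t ^+ 4 * X = t ^+ 2 * A + t ^+ 2 * B + t ^+ 2 * W.
    by rewrite (_ : 4 = 2 + 2)%N // exprD -mulrA K !mulrDr.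
  have hW : t ^+ 2 * W <= A + B + X.
    apply: le_trans (_ : t ^+ 2 * X <= _); first by rewrite ler_wpM2l ?exprn_ge0.
    by rewrite K lerD2l.
  apply: le_trans (_ : t ^+ 2 * A + t ^+ 2 * B + (A + B + X) <= _); first by rewrite lerD2l.
  rewrite mulrDl mul1r.
  have -> : t ^+ 2 * A + t ^+ 2 * B + (A + B + X) =
     t ^+ 2 * B + t ^+ 2 * A + (A + B) + X by ring.
  by rewrite lerD2r.
rewrite ler_pM2r // in i3.
rewrite /bound15 /sqrt.
apply: final => //.
- by rewrite (_ : 4 = 2 * 2)%N // exprM.
- by rewrite (_ : 8 = 2 * 4)%N // exprM.
- by rewrite edel' pair_ge0.
- by rewrite edel2 Dl_ge0 ?addr_ge0 ?exprn_ge0.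
Qed.


End Aux.

Theorem mainTheorem15 (R : realType) (n : nat) (a : nat -> R[i]) (z : R[i]) :
  (2 <= n)%N -> a 1%N != 0 -> root (monic_poly_of n a) z ->
  `|z| <= bound15 n a.
Proof.
case: n => [|[|m]] // _ _; exact: Aux.mainN.
Qed.
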